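(* Let $\mathfrak L$ be a GNN layer of input dimension $p$. Then there is a $\lambda\in\mathbb N_{>0}$ such that for all graphs $G$, all signals $\mathcal x,\mathcal x':V(G)\to\mathbb R^p$, and all vertices $v\in V(G)$, $$\|\tilde{\mathfrak L}(G,\mathcal x)(v)-\tilde{\mathfrak L}(G,\mathcal x')(v)\|_\infty\le\lambda\,\|\mathcal x|_{N[v]}-\mathcal x'|_{N[v]}\|_\infty\max\{\deg(v),1\}\le\lambda\,\|\mathcal x-\mathcal x'\|_\infty|G|.$$
   Context: Graphs are finite, simple, undirected with nonempty vertex set; $N(v)$ is the neighbourhood, $N[v]=N(v)\cup\{v\}$, $\deg(v)=|N(v)|$, $|G|=|V(G)|$. For a signal $\mathcal y$ and $W\subseteq V(G)$, $\|\mathcal y|_W\|_\infty=\max_{w\in W}\|\mathcal y(w)\|_\infty$, and $\|\mathcal y\|_\infty=\|\mathcal y|_{V(G)}\|_\infty$. An FNN has a finite dag skeleton, Lipschitz continuous activation functions $\mathfrak a_v$, real weights and biases; sources are inputs, sinks outputs, a non-input node computes $\mathfrak a_v(b_v+\sum_{uv\in E}w_{uv}\cdot\text{value}(u))$. A GNN layer $\mathfrak L=(\mathrm{msg},\mathrm{agg},\mathrm{comb})$ of input dimension $p$ has $\mathrm{msg}:\mathbb R^{2p}\to\mathbb R^r$, $\mathrm{comb}:\mathbb R^{p+r}\to\mathbb R^q$ computed by FNNs and $\mathrm{agg}$ coordinatewise sum, mean or maximum of finite multisets (value $\mathbf 0$ on the empty multiset); $\tilde{\mathfrak L}(G,\mathcal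 x)(v)=\mathrm{comb}\big(\mathcal x(v),\mathrm{agg}\{\!\{\mathrm{msg}(\mathcal x(v),\mathcal x(w)):w\in N(v)\}\!\}\big)$. *)

(* Defs.v *)
From HB Require Import structures.
From mathcomp Require Import all_boot all_order all_algebra.
From mathcomp Require Import reals.
Set Implicit Arguments. Unset Strict Implicit. Unset Printing Implicit Defensive.
Import Order.TTheory GRing.Theory Num.Theory.
Local Open Scope ring_scope.

(* A finite dag skeleton on nodes 'I_fnn_size (acyclicity is expressed by a
   topological labelling: every edge goes from a smaller to a larger node,
   which is w.l.o.g. for finite dags). *)
Record fnn (R : realType) (m k : nat) := FNN {
  fnn_size : nat;
  fnn_edge : rel 'I_fnn_size;
  fnn_weight : 'I_fnn_size -> 'I_fnn_size -> R;
  fnn_bias : 'I_fnn_size -> R;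
  fnn_act : 'I_fnn_size -> R -> R;
  fnn_in : 'I_m -> 'I_fnn_size;
  fnn_out : 'I_k -> 'I_fnn_size }.
Arguments fnn_size {R m k}.
Arguments fnn_edge {R m k}.
Arguments fnn_weight {R m k}.
Arguments fnn_bias {R m k}.
Arguments fnn_act {R m k}.
Arguments fnn_in {R m k}.
Arguments fnn_out {R m k}.

Definition fnn_source R m k (N : fnn R m k) (j : 'I_(fnn_size N)) : bool :=
  [forall i, ~~ fnn_edge N i j].
Definition fnn_sink R m k (N : fnn R m k) (j : 'I_(fnn_size N)) : bool :=
  [forall i, ~~ fnn_edge N j i].

Arguments fnn_source {R m k} N j.
Arguments fnn_sink {R m k} N j.

Definition lipschitz (R : realType) (f : R -> R) : Prop :=
  exists L : R, forall a b, `|f a - f b| <= L * `|a - b|.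

Definition fnn_valid R m k (N : fnn R m k) : Prop :=
  (forall i j, fnn_edge N i j -> (i < j)%N) /\
  injective (fnn_in N) /\
  (forall j, fnn_source N j <-> exists t, fnn_in N t = j) /\
  injective (fnn_out N) /\
  (forall j, fnn_sink N j <-> exists t, fnn_out N t = j) /\
  (forall j, lipschitz (fnn_act N j)).

Definition fnn_step R m k (N : fnn R m k) (x : 'I_m -> R)
  (val : 'I_(fnn_size N) -> R) (j : 'I_(fnn_size N)) : R :=
  if [pick t | fnn_in N t == j] is Some t then x t
  else fnn_act N j (fnn_bias N j +
         \sum_(i | fnn_edge N i j) fnn_weight N i j * val i).

Arguments fnn_step {R m k} N x val j.

(* after fnn_size iterations every node carries its (dag-recursive) value *)
Definition fnn_eval R m k (N : fnn R m k) (x : 'I_m -> R) : 'I_k -> R :=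
  fun o => iter (fnn_size N) (fnn_step N x) (fun _ => 0) (fnn_out N o).

Arguments fnn_eval {R m k} N x o.

Definition vcat (R : realType) a b (x : 'I_a -> R) (y : 'I_b -> R)
  : 'I_(a + b) -> R :=
  fun i => match split i with inl i1 => x i1 | inr i2 => y i2 end.

Definition vnorm (R : realType) n (y : 'I_n -> R) : R :=
  \big[Num.max/0]_(i < n) `|y i|.

Inductive agg_kind := AggSum | AggMean | AggMax.

Definition seq_max (R : realType) (s : seq R) : R :=
  if s is h :: t then foldr Num.max h t else 0.

Definition agg_apply (R : realType) r (a : agg_kind) (s : seq ('I_r -> R))
  : 'I_r -> R :=
  fun i => match a with
  | AggSum => \sum_(y <- s) y i
  | AggMean => (\sum_(y <- s) y i) / (size s)%:R   (* 0 on the empty multiset *)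
  | AggMax => seq_max [seq y i | y <- s]
  end.

Record gnn_layer (R : realType) (p : nat) := GNNLayer {
  gl_r : nat;
  gl_q : nat;
  gl_msg : fnn R (p + p) gl_r;
  gl_agg : agg_kind;
  gl_comb : fnn R (p + gl_r) gl_q }.
Arguments gl_r {R p}.
Arguments gl_q {R p}.
Arguments gl_msg {R p}.
Arguments gl_agg {R p}.
Arguments gl_comb {R p}.

Definition gnn_valid R p (L : gnn_layer R p) : Prop :=
  fnn_valid (gl_msg L) /\ fnn_valid (gl_comb L).

Definition simple_graph (T : finType) (e : rel T) : Prop :=
  symmetric e /\ irreflexive e.

Definition nbhd (T : finType) (e : rel T) (v : T) : {set T} := [set w | e v w].
Definition cnbhd (T : finType) (e : rel T) (v : T) : {set T} := v |: nbhd e v.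
Definition deg (T : finType) (e : rel T) (v : T) : nat := #|nbhd e v|.

Definition layer_apply (R : realType) p (L : gnn_layer R p) (T : finType) (e : rel T)
  (x : T -> 'I_p -> R) (v : T) : 'I_(gl_q L) -> R :=
  fnn_eval (gl_comb L)
    (vcat (x v) (agg_apply (gl_agg L)
       [seq fnn_eval (gl_msg L) (vcat (x v) (x w)) | w <- enum (nbhd e v)])).

Definition sig_norm_on (R : realType) p (T : finType) (x : T -> 'I_p -> R) (W : {set T}) : R :=
  \big[Num.max/0]_(w in W) vnorm (x w).
Definition sig_norm (R : realType) p (T : finType) (x : T -> 'I_p -> R) : R :=
  sig_norm_on x [set: T].

Definition sig_sub (R : realType) p (T : finType) (x x' : T -> 'I_p -> R) : T -> 'I_p -> R :=
  fun w i => x w i - x' w i.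

Arguments layer_apply {R p} L {T} e x v _.
Arguments sig_norm_on {R p T} x W.
Arguments sig_norm {R p T} x.
Arguments sig_sub {R p T} x x' _ _.
Arguments nbhd {T} e v.
Arguments cnbhd {T} e v.
Arguments deg {T} e v.
Arguments vnorm {R n} y.
Arguments gnn_valid {R p} L.
Arguments simple_graph {T} e.

(* Main.v *)
Require Import Defs.
From HB Require Import structures.
From mathcomp Require Import all_boot all_order all_algebra.
From mathcomp Require Import reals.
From mathcomp Require Import lra ring.
Import Order.TTheory GRing.Theory Num.Theory.
Local Open Scope ring_scope.

Section Aux.
Variable R : realType.

Lemma bmax_ge0 (I : Type) (r : seq I) (P : pred I) (F : I -> R) :
  (forall i, P i -> 0 <= F i) -> 0 <= \big[Num.max/0]_(i <- r | P i) F i.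
Proof.
move=> H; elim/big_ind: _ => //.
  by move=> a b ha hb; rewrite le_max ha.
Qed.

Lemma bmax_le (I : Type) (r : seq I) (P : pred I) (F : I -> R) c :
  0 <= c -> (forall i, P i -> F i <= c) -> \big[Num.max/0]_(i <- r | P i) F i <= c.
Proof.
move=> c0 H; elim/big_ind: _ => //.
by move=> a b ha hb; rewrite ge_max ha hb.
Qed.

Lemma bmax_ub (I : eqType) (r : seq I) (P : pred I) (F : I -> R) i :
  i \in r -> P i -> F i <= \big[Num.max/0]_(j <- r | P j) F j.
Proof.
elim: r => // a r IH; rewrite in_cons big_cons => /orP [/eqP <- | ir] Pi.
  by rewrite Pi le_max lexx.
case: (P a); last exact: IH.
by rewrite le_max (IH ir Pi) orbT.
Qed.

Lemma vnorm_ge0 n (y : 'I_n -> R) : 0 <= vnorm y.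
Proof. by apply: bmax_ge0 => i _. Qed.

Lemma vnorm_ub n (y : 'I_n -> R) i : `|y i| <= vnorm y.
Proof. by apply: (bmax_ub _ (index_enum _) (fun _ => true) (fun j => `|y j|)); rewrite ?mem_index_enum. Qed.

Lemma vnorm_le n (y : 'I_n -> R) c : 0 <= c -> (forall i, `|y i| <= c) -> vnorm y <= c.
Proof. by move=> c0 H; apply: bmax_le. Qed.

Lemma fin_bound (I : finType) (Q : I -> R -> Prop) :
  (forall j c c', c <= c' -> Q j c -> Q j c') -> (forall j, exists c, Q j c) ->
  exists c, 0 <= c /\ forall j, Q j c.
Proof.
move=> mono H.
have: forall s : seq I, exists c, 0 <= c /\ forall j, j \in s -> Q j c.
  elim=> [|a s [c [c0 Hc]]]; first by exists 0.
  have [ca Ha] := H a.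
  exists (Num.max c ca); split; first by rewrite le_max c0.
  move=> j; rewrite in_cons => /orP [/eqP -> | js].
    by apply: (mono _ ca) => //; rewrite le_max lexx orbT.
  by apply: (mono _ c) => //; [rewrite le_max lexx | apply: Hc].
move=> /(_ (enum I)) [c [c0 Hc]]; exists c; split => // j.
by apply: Hc; rewrite mem_enum.
Qed.

Lemma max_diff (a b a' b' c : R) : `|a - a'| <= c -> `|b - b'| <= c ->
  `|Num.max a b - Num.max a' b'| <= c.
Proof.
rewrite !ler_norml => /andP [h1 h2] /andP [h3 h4].
case: (leP a b) => h5; case: (leP a' b') => h6; apply/andP; split; lra.
Qed.

Lemma seq_max_diff (T : eqType) (r : seq T) (F G : T -> R) c : 0 <= c ->
  (forall w, w \in r -> `|F w - G w| <= c) ->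
  `|seq_max (map F r) - seq_max (map G r)| <= c.
Proof.
move=> c0; case: r => [|a r] /=; first by rewrite subr0 normr0.
move=> H.
have Ha : `|F a - G a| <= c by apply: H; rewrite mem_head.
have Hr : forall w, w \in r -> `|F w - G w| <= c.
  by move=> w wr; apply: H; rewrite in_cons wr orbT.
elim: r Hr {H} => //= b r IH Hr.
apply: max_diff; first by apply: Hr; rewrite mem_head.
by apply: IH => w wr; apply: Hr; rewrite in_cons wr orbT.
Qed.

End Aux.
Section Aux2.
Variable R : realType.

Lemma fnn_lip m k (N : fnn R m k) : fnn_valid N -> exists C, 0 <= C /\
  forall x x' o, `|fnn_eval N x o - fnn_eval N x' o| <= C * vnorm (fun t => x t - x' t).
Proof.
move=> [_ [_ [_ [_ [_ lip]]]]].
suff: forall n, exists C, 0 <= C /\ forall x x' j,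
  `|iter n (fnn_step N x) (fun _ => 0) j - iter n (fnn_step N x') (fun _ => 0) j|
    <= C * vnorm (fun t => x t - x' t).
  move=> /(_ (fnn_size N)) [C [C0 HC]]; exists C; split => // x x' o; exact: HC.
elim=> [|n [C [C0 HC]]].
  by exists 0; split => // x x' j; rewrite /= subrr normr0 mul0r.
have [c [c0 Hc]] : exists c, 0 <= c /\ forall j, (fun j c => forall x x',
  `|fnn_step N x (iter n (fnn_step N x) (fun _ => 0)) j -
    fnn_step N x' (iter n (fnn_step N x') (fun _ => 0)) j|
    <= c * vnorm (fun t => x t - x' t)) j c.
  apply: fin_bound.
    move=> j a b ab H x x'; apply: le_trans (H x x') _.
    by apply: ler_wpM2r => //; apply: vnorm_ge0.
  move=> j; rewrite /fnn_step; case: pickP => [t _|_].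
    by exists 1 => x x'; rewrite mul1r; exact: vnorm_ub.
  have [Lj HL] := lip j.
  exists (Num.max Lj 0 * (\sum_(i | fnn_edge N i j) `|fnn_weight N i j| * C)) => x x'.
  set S := \sum_(i | _) _ * iter n (fnn_step N x) _ i.
  set S' := \sum_(i | _) _ * iter n (fnn_step N x') _ i.
  apply: le_trans (HL _ _) _.
  have -> : fnn_bias N j + S - (fnn_bias N j + S') = S - S' by ring.
  have HS : `|S - S'| <= (\sum_(i | fnn_edge N i j) `|fnn_weight N i j| * C)
                          * vnorm (fun t => x t - x' t).
    rewrite /S /S' -sumrB mulr_suml; apply: le_trans (ler_norm_sum _ _ _) _.
    apply: ler_sum => i _; rewrite -mulrBr normrM -mulrA.
    by apply: ler_wpM2l => //; apply: HC.
  apply: (@le_trans _ _ (Num.max Lj 0 * `|S - S'|)).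
    by apply: ler_wpM2r => //; rewrite le_max lexx.
  rewrite -mulrA; apply: ler_wpM2l => //; by rewrite le_max lexx orbT.
exists c; split => // x x' j; rewrite !iterS; exact: Hc.
Qed.

End Aux2.

Theorem lemma4p3 (R : realType) (p : nat) (L : gnn_layer R p) :
  gnn_valid L ->
  exists lam : nat, (0 < lam)%N /\
    forall (T : finType) (e : rel T), simple_graph e ->
    forall (x x' : T -> 'I_p -> R) (v : T),
      vnorm (fun i => layer_apply L e x v i - layer_apply L e x' v i)
        <= lam%:R * sig_norm_on (sig_sub x x') (cnbhd e v) * (maxn (deg e v) 1)%:R
      /\ lam%:R * sig_norm_on (sig_sub x x') (cnbhd e v) * (maxn (deg e v) 1)%:R
        <= lam%:R * sig_norm (sig_sub x x') * #|T|%:R.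
Proof.
move=> [vm vc].
have [Cm [Cm0 HCm]] := fnn_lip _ _ _ _ vm.
have [Cc [Cc0 HCc]] := fnn_lip _ _ _ _ vc.
set K := Cc * (1 + Cm).
have K0 : 0 <= K by rewrite /K; apply: mulr_ge0 => //; lra.
have Klam : K <= (Num.Def.archi_bound K).+1%:R.
  apply: le_trans (ltW (archi_boundP K0)) _; by rewrite ler_nat.
exists (Num.Def.archi_bound K).+1; split => // T e _ x x' v.
set lam := (Num.Def.archi_bound K).+1%:R.
set D := sig_norm_on (sig_sub x x') (cnbhd e v).
set M := (maxn (deg e v) 1)%:R.
have D0 : 0 <= D by apply: bmax_ge0 => w _; apply: vnorm_ge0.
have M1 : 1 <= M by rewrite /M ler1n leq_maxr.
have M0 : 0 <= M by apply: le_trans M1; exact: ler01.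
have DM0 : 0 <= D * M by exact: mulr_ge0.
have C1 : 1 <= 1 + Cm by rewrite lerDl.
have HW : forall w, w \in cnbhd e v -> forall i, `|x w i - x' w i| <= D.
  move=> w wN i; apply: le_trans (vnorm_ub _ _ (sig_sub x x' w) i) _.
  by apply: (bmax_ub _ _ (index_enum _) (fun w => w \in cnbhd e v)
    (fun w => vnorm (sig_sub x x' w))); rewrite ?mem_index_enum.
have Hv : forall i, `|x v i - x' v i| <= D.
  by apply: HW; rewrite /cnbhd setU11.
set f := fun w => fnn_eval (gl_msg L) (vcat (x v) (x w)).
set f' := fun w => fnn_eval (gl_msg L) (vcat (x' v) (x' w)).
have Hf : forall w, w \in nbhd e v -> forall o, `|f w o - f' w o| <= Cm * D.
  move=> w wN o; apply: le_trans (HCm _ _ o) _; apply: ler_wpM2l => //.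
  apply: vnorm_le => // i; rewrite /vcat; case: (split i) => j; first exact: Hv.
  by apply: HW; rewrite /cnbhd setU1r.
have HS : forall o, `|\sum_(w in nbhd e v) f w o - \sum_(w in nbhd e v) f' w o|
    <= Cm * D * (deg e v)%:R.
  move=> o; rewrite -sumrB; apply: le_trans (ler_norm_sum _ _ _) _.
  apply: le_trans (ler_sum _ (fun w wN => Hf w wN o)) _.
  by rewrite sumr_const mulr_natr.
have CDM : Cm * D <= Cm * D * M.
  rewrite -{1}(mulr1 (Cm * D)); apply: ler_wpM2l => //; exact: mulr_ge0.
have Hagg : forall o, `|agg_apply (gl_agg L) [seq f w | w <- enum (nbhd e v)] o
    - agg_apply (gl_agg L) [seq f' w | w <- enum (nbhd e v)] o| <= Cm * D * M.
  move=> o; rewrite /agg_apply; case: (gl_agg L).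
  - rewrite !big_map !big_enum /=; apply: le_trans (HS o) _.
    apply: ler_wpM2l; first exact: mulr_ge0.
    by rewrite /M ler_nat leq_maxl.
  - rewrite !size_map -cardE !big_map !big_enum /= -/(deg e v) -mulrBl normrM.
    case: (posnP (deg e v)) => [-> | dpos].
      by rewrite invr0 normr0 mulr0; apply: mulr_ge0 => //; exact: mulr_ge0.
    have d0 : 0 < (deg e v)%:R :> R by rewrite ltr0n.
    rewrite normfV normr_nat.
    apply: le_trans CDM; rewrite ler_pdivrMr //; exact: HS.
  - rewrite -!map_comp; apply: seq_max_diff.
      by apply: mulr_ge0 => //; exact: mulr_ge0.
    move=> w; rewrite mem_enum => wN /=; apply: le_trans CDM; exact: Hf.
split.
  apply: vnorm_le.
    by apply: mulr_ge0; [apply: mulr_ge0 => //; rewrite /lam ler0n | exact: M0].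
  move=> o; rewrite /layer_apply; apply: le_trans (HCc _ _ o) _.
  apply: (@le_trans _ _ (Cc * ((1 + Cm) * D * M))).
    apply: ler_wpM2l => //; apply: vnorm_le; first by rewrite -mulrA; apply: mulr_ge0 => //; apply: le_trans C1; exact: ler01.
    move=> i; rewrite /vcat; case: (split i) => j.
      apply: le_trans (Hv j) _; rewrite -mulrA; apply: le_trans (ler_peMl _ _) => //.
      exact: ler_peMr.
    apply: le_trans (Hagg j) _; rewrite -!mulrA; apply: ler_wpM2r => //; lra.
  rewrite !mulrA -/K; apply: ler_wpM2r; first exact: M0.
  by apply: ler_wpM2r.
rewrite -!mulrA; apply: ler_wpM2l; first by rewrite /lam ler0n.
apply: ler_pM => //.
  apply: bmax_le; first by apply: bmax_ge0 => w _; apply: vnorm_ge0.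
  move=> w _; apply: (bmax_ub _ _ (index_enum _) (fun w => w \in [set: T])
    (fun w => vnorm (sig_sub x x' w))); by rewrite ?mem_index_enum ?in_setT.
rewrite /M ler_nat geq_max max_card /=.
by apply/card_gt0P; exists v.
Qed.
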